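(* Fix $\epsilon>0$, $\delta>0$ and an integer $L\geq 2$ such that $2\epsilon<\delta\leq 1/L$. Then the Opportunistic Bisection strategy (which uses $2L+\lceil\log(1/(\epsilon L))\rceil$ queries) is $(\epsilon,\delta,L)$-private.
   Context: Model: unknown true value $v^*\in[0,1)$; a learner submits queries $q_k\in[0,1)$ and receives $r_k=\mathbb{I}(v^*\geq q_k)$. A learner strategy of length $N$ uses a random seed $Y$ uniform on $\{1,\dots,\mathcal{Y}\}$, with $q_1=\phi_1(Y)$, $q_k=\phi_k(r_1,\dots,r_{k-1},Y)$, and estimate $\hat x=\phi^E(r_1,\dots,r_N,Y)$. $\mathcal{Q}(x)$ is the set of query sequences with positive probability (over $Y$) when $v^*=x$; information set $\mathcal{I}(\overline q)=\{x\in[0,1):\overline q\in\mathcal{Q}(x)\}$. $C_\delta(\mathcal{E})$ is the least number of closed intervals of length at most $\delta$ covering $\mathcal{E}$. A strategy is $(\epsilon,\delta,L)$-private if $\mathbb{P}(|\hat x(x,Y)-x|\leq\epsilon/2)=1$ for all $x\in[0,1)$ and $C_\delta(\mathcal{I}(\overline q))\geq L$ for all $x$ and all $\overline q\in\mathcal{Q}(x)$. Bisection searches: for an interval $\mathcal{J}$ and $M\in\mathbb{N}$, set $\mathcal{J}_1=\mathcal{J}$, $q_i=$ midpoint of $\mathcal{J}_i$, and $\mathcal{J}_{i+1}=[\inf\mathcal{J}_i,q_i)$ or $[q_i,\sup\mathcal{J}_i)$ according as a bit $b_i$ is 0 or 1, for $i=1,\dots,M$. It is a truthful bisection search if $b_i=r_i$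 (the response to $q_i$), and a fictitious bisection search if $b_i=Z_i$ where $Z_1,Z_2,\dots$ are i.i.d. Bernoulli(1/2) generated from $Y$. Opportunistic Bisection strategy: Phase 1: $q_i=(i-1)/L$ for $i=1,\dots,L$, and $q_{L+i}=q_i+\epsilon$ for $i=1,\dots,L$; the intervals $[q_i,q_{i+L})$ are called guesses. Let the sub-intervals be $\mathcal{J}^{(i)}=[(i-1)/L+\epsilon,\ i/L)$, $i=1,\dots,L$. Phase 2 (queries $q_{2L+1},\dots,q_{2L+M}$ with $M=\lceil\log(1/(\epsilon L))\rceil$, log base 2): if no guess contains $v^*$, perform a truthful bisection search of the sub-interval $\mathcal{J}^*$ containing $v^*$; if some guess contains $v^*$, choose a sub-interval uniformly at random (using $Y$) and perform a fictitious bisection search of it. The estimate is the midpoint of the guess containing $v^*$ in the latter case, and otherwise the midpoint of the final interval of the truthful search (the interval adjacent to $q_N$ known to contain $v^*$). *)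

(* Defs.v *)
From HB Require Import structures.
From mathcomp Require Import all_boot all_order all_algebra.
From mathcomp Require Import all_classical all_reals all_analysis.

Import Order.TTheory GRing.Theory Num.Theory.
Local Open Scope ring_scope.
Local Open Scope classical_set_scope.

(* A learner strategy of length N with a uniformly random seed Y in the finite
   (nonempty) type s_seed; query q_{k+1} = s_query k [r_1;..;r_k] Y,
   estimate = s_est [r_1;..;r_N] Y. *)
Record strategy (R : realType) := Strategy {
  s_N : nat;
  s_seed : finType;
  s_query : nat -> seq bool -> s_seed -> R;
  s_est : seq bool -> s_seed -> R }.

(* first k responses r_i = I(v* >= q_i) when v* = x and seed y *)
Fixpoint responses (R : realType) (S : strategy R) (x : R) (y : s_seed R S) (k : nat)
  : seq bool :=
  match k with
  | 0 => [::]
  | k'.+1 => let rs := responses R S x y k' in rcons rs (s_query R S k' rs y <= x)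
  end.

Definition queries (R : realType) (S : strategy R) (x : R) (y : s_seed R S) : seq R :=
  [seq s_query R S k (responses R S x y k) y | k <- iota 0 (s_N R S)].

Definition estimate (R : realType) (S : strategy R) (x : R) (y : s_seed R S) : R :=
  s_est R S (responses R S x y (s_N R S)) y.

Definition seed_prob (R : realType) (S : strategy R) (P : pred (s_seed R S)) : R :=
  #|P|%:R / #|s_seed R S|%:R.

Definition Qset (R : realType) (S : strategy R) (x : R) : set (seq R) :=
  [set qb | 0 < seed_prob R S (fun y => queries R S x y == qb)].

Definition info_set (R : realType) (S : strategy R) (qb : seq R) : set R :=
  [set x | (0 <= x < 1) /\ Qset R S x qb].

Definition coverable (R : realType) (delta : R) (E : set R) (n : nat) : Prop :=
  exists a b : 'I_n -> R,
    (forall i, a i <= b i /\ b i - a i <= delta) /\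
    (forall x, E x -> exists i, a i <= x <= b i).

(* C_delta(E) >= L  (C_delta = least such n, +infinity if none exists) *)
Definition Cdelta_ge (R : realType) (delta : R) (E : set R) (L : nat) : Prop :=
  forall n, coverable R delta E n -> (L <= n)%N.

Definition private (R : realType) (eps delta : R) (L : nat) (S : strategy R) : Prop :=
  (forall x : R, 0 <= x < 1 ->
     seed_prob R S (fun y => `|estimate R S x y - x| <= eps / 2) = 1) /\
  (forall (x : R) (qb : seq R), 0 <= x < 1 -> Qset R S x qb ->
     Cdelta_ge R delta (info_set R S qb) L).

(* an interval [a,b) is represented by the pair (a,b) *)
Definition midpt (R : realType) (I : R * R) : R := (I.1 + I.2) / 2.

Definition bisect_step (R : realType) (I : R * R) (b : bool) : R * R :=
  if b then (midpt R I, I.2) else (I.1, midpt R I).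

Definition bisect_interval (R : realType) (J : R * R) (bits : seq bool) : R * R :=
  foldl (bisect_step R) J bits.

Definition obM (R : realType) (eps : R) (L : nat) : nat :=
  absz (Num.ceil (ln (1 / (eps * L%:R)) / ln 2)).

(* sub-interval J^(j+1) = [j/L + eps, (j+1)/L)  (0-indexed j) *)
Definition subint (R : realType) (eps : R) (L j : nat) : R * R :=
  (j%:R / L%:R + eps, j.+1%:R / L%:R).

(* guess number i+1 (0-indexed i) = [q_{i+1}, q_{i+1+L}) contains v* *)
Definition guess_hit (L : nat) (rs : seq bool) (i : nat) : bool :=
  nth false rs i && ~~ nth false rs (i + L).

Definition in_guess (L : nat) (rs : seq bool) : bool := has (guess_hit L rs) (iota 0 L).

(* 0-indexed number of the sub-interval containing v*, read off the responses
   to q_1..q_L (number of k with (k-1)/L <= v*, minus one) *)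
Definition Jstar_index (L : nat) (rs : seq bool) : nat := (count id (take L rs)).-1.

(* seed Y = (uniform sub-interval index, fair bits Z_1..Z_M) *)
Definition ob_seed (L M : nat) : finType := ('I_L * M.-tuple bool)%type.

Definition ob_query (R : realType) (eps : R) (L M : nat) (k : nat) (rs : seq bool)
  (y : ob_seed L M) : R :=
  if (k < L)%N then k%:R / L%:R
  else if (k < 2 * L)%N then (k - L)%:R / L%:R + eps
  else let i := (k - 2 * L)%N in
    if in_guess L rs
    then (* fictitious bisection search of a random sub-interval *)
      midpt R (bisect_interval R (subint R eps L (nat_of_ord y.1)) (take i (val y.2)))
    else (* truthful bisection search of J* *)
      midpt R (bisect_interval R (subint R eps L (Jstar_index L rs)) (take i (drop (2 * L) rs))).

Definition ob_est (R : realType) (eps : R) (L M : nat) (rs : seq bool)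
  (y : ob_seed L M) : R :=
  if in_guess L rs
  then (* midpoint of the guess containing v* *)
    (find (guess_hit L rs) (iota 0 L))%:R / L%:R + eps / 2
  else midpt R (bisect_interval R (subint R eps L (Jstar_index L rs)) (drop (2 * L) rs)).

Definition opportunistic_bisection (R : realType) (eps : R) (L : nat) : strategy R :=
  @Strategy R (2 * L + obM R eps L)%N (ob_seed L (obM R eps L))
    (ob_query R eps L (obM R eps L)) (ob_est R eps L (obM R eps L)).

(* Main.v *)
Require Import Defs.
From HB Require Import structures.
From mathcomp Require Import all_boot all_order all_algebra.
From mathcomp Require Import all_classical all_reals all_analysis.
From mathcomp Require Import zify ring lra.
Import Order.TTheory GRing.Theory Num.Theory.
Local Open Scope ring_scope.

Section Gen.
Variables (R : realType) (S : strategy R) (x : R) (y : s_seed R S).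

Lemma size_resp k : size (responses R S x y k) = k.
Proof. by elim: k => //= k IH; rewrite size_rcons IH. Qed.

Lemma resp_take k n : (k <= n)%N -> responses R S x y k = take k (responses R S x y n).
Proof.
elim: n => [|n IH]; first by rewrite leqn0 => /eqP ->.
rewrite leq_eqVlt => /orP [/eqP ->|]; first by rewrite take_oversize // size_resp.
rewrite ltnS => kn /=; rewrite -cats1 takel_cat ?size_resp //; exact: IH.
Qed.

Lemma nth_resp k n : (k < n)%N ->
  nth false (responses R S x y n) k = (s_query R S k (take k (responses R S x y n)) y <= x).
Proof.
move=> kn; rewrite -resp_take ?(ltnW kn) //.
rewrite -(nth_take false (ltnSn k)) -(@resp_take k.+1 n) //=.
by rewrite nth_rcons size_resp ltnn eqxx.
Qed.
End Gen.

Lemma count_dc (P : pred nat) n : (forall k, P k.+1 -> P k) ->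
  (forall k, (k < count P (iota 0 n))%N -> P k) /\
  ((count P (iota 0 n) < n)%N -> ~~ P (count P (iota 0 n))).
Proof.
move=> dc.
have dc' : forall k m, (k <= m)%N -> P m -> P k.
  move=> k m; elim: m => [|m IH]; first by rewrite leqn0 => /eqP ->.
  rewrite leq_eqVlt => /orP [/eqP -> //|]; rewrite ltnS => km Pm.
  exact/IH/dc.
elim: n => [|n [IH1 IH2]]; first by [].
rewrite -addn1 iotaD count_cat /= addn0 add0n.
case Pn: (P n) => /=.
- have cn : count P (iota 0 n) = n.
    apply/eqP; rewrite eqn_leq; apply/andP; split.
      by rewrite -{2}(size_iota 0 n) count_size.
    rewrite leqNgt; apply/negP => /IH2; rewrite (dc' _ n) //.
    by rewrite -{2}(size_iota 0 n) count_size.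
  rewrite cn addn1 ltnn; split => // k; rewrite ltnS => kn; exact: dc' kn Pn.
- rewrite addn0; split => // ; rewrite addn1 ltnS leq_eqVlt => /orP [/eqP ->|]; first by rewrite Pn.
  exact: IH2.
Qed.

Section OB.
Variables (R : realType) (eps : R) (L M : nat).

Lemma q_lt k rs y : (k < L)%N -> ob_query R eps L M k rs y = k%:R / L%:R.
Proof. by rewrite /ob_query => ->. Qed.

Lemma q_mid k rs y : (L <= k < 2 * L)%N -> ob_query R eps L M k rs y = (k - L)%:R / L%:R + eps.
Proof. by move=> /andP[h1 h2]; rewrite /ob_query h2 ltnNge h1. Qed.

Lemma in_guess_take k rs : (2 * L <= k)%N -> in_guess L (take k rs) = in_guess L rs.
Proof.
move=> hk; rewrite /in_guess; apply: eq_in_has => i; rewrite mem_iota => /andP[_ iL].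
rewrite /guess_hit !nth_take //; lia.
Qed.

Lemma q_ph2 k rs y : (2 * L <= k)%N -> ob_query R eps L M k (take k rs) y =
  if in_guess L rs then midpt R (bisect_interval R (subint R eps L (nat_of_ord y.1)) (take (k - 2 * L) (val y.2)))
  else midpt R (bisect_interval R (subint R eps L (Jstar_index L rs)) (take (k - 2 * L) (drop (2 * L) rs))).
Proof.
move=> hk; rewrite /ob_query.
have -> : (k < L)%N = false by lia.
have -> : (k < 2 * L)%N = false by lia.
rewrite in_guess_take //.
have -> : Jstar_index L (take k rs) = Jstar_index L rs.
  by rewrite /Jstar_index take_takel //; lia.
have -> : take (k - 2 * L) (drop (2 * L) (take k rs)) = take (k - 2 * L) (drop (2 * L) rs).
  by rewrite !take_drop subnK // take_takel.
by [].
Qed.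
End OB.

Lemma bisect_inv (R : realType) (J : R * R) (x : R) (bits : seq bool) :
  J.1 <= x < J.2 ->
  (forall i, (i < size bits)%N ->
     nth false bits i = (midpt R (bisect_interval R J (take i bits)) <= x)) ->
  (bisect_interval R J bits).1 <= x < (bisect_interval R J bits).2 /\
  (bisect_interval R J bits).2 - (bisect_interval R J bits).1 = (J.2 - J.1) / 2 ^+ size bits.
Proof.
move=> hJ; elim/last_ind: bits => [|s b IH] hb.
  by rewrite /bisect_interval /= expr0 divr1.
have hs : forall i, (i < size s)%N ->
     nth false s i = (midpt R (bisect_interval R J (take i s)) <= x).
  move=> i hi; have := hb i; rewrite size_rcons -cats1 nth_cat hi takel_cat ?(ltnW hi) //.
  by move=> h; exact: (h (ltnW hi)).
have hbb : b = (midpt R (bisect_interval R J s) <= x).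
  have := hb (size s); rewrite size_rcons ltnSn nth_rcons ltnn eqxx -cats1 takel_cat // take_size.
  by move=> h; apply: h.
case: (IH hs) => /andP [h1 h2] hl.
rewrite /bisect_interval foldl_rcons -/(bisect_interval R J s) size_rcons exprSr.
move: h1 h2 hl hbb; rewrite /bisect_step /midpt.
case: (bisect_interval R J s) => a c /= h1 h2 hl ->.
have h2' : 0 < (2:R) ^+ size s by apply: exprn_gt0.
case: ifP => /= hm; split.
- by rewrite hm h2.
- by rewrite invfM mulrA -hl; field.
- by rewrite h1 ltNge hm.
- by rewrite invfM mulrA -hl; field.
Qed.

Lemma obM_bound (R : realType) (eps : R) (L : nat) :
  0 < eps -> (0 < L)%N -> eps * L%:R < 1 ->
  1 <= eps * L%:R * 2 ^+ obM R eps L.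
Proof.
move=> he hL hl.
have hLr : 0 < L%:R :> R by rewrite ltr0n.
have hz : 1 < 1 / (eps * L%:R).
  by rewrite ltr_pdivlMr ?mulr_gt0 // mul1r.
have hln2 : 0 < ln (2:R) by apply: ln_gt0; lra.
set t := ln (1 / (eps * L%:R)) / ln 2.
have ht : 0 < t by apply: divr_gt0 => //; apply: ln_gt0.
have hM : t <= (obM R eps L)%:R.
  have hc : (0 <= Num.ceil t)%R by rewrite ceil_ge0; lra.
  rewrite /obM natr_absz -/t (ger0_norm hc); exact: ceil_ge.
have : ln (1 / (eps * L%:R)) <= ln ((2:R) ^+ obM R eps L).
  rewrite lnXn; last lra.
  rewrite -(mulr_natr (ln (2:R))).
  have -> : ln (1 / (eps * L%:R)) = t * ln 2 by rewrite /t divfK // gt_eqF.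
  by rewrite mulrC ler_wpM2l // ltW.
rewrite ler_ln ?posrE ?exprn_gt0 //; last by lra.
rewrite ler_pdivrMr ?mulr_gt0 //.
by rewrite mulrC.
Qed.

Definition obS (R : realType) (eps : R) (L M : nat) : strategy R :=
  @Strategy R (2 * L + M)%N (ob_seed L M) (ob_query R eps L M) (ob_est R eps L M).

Ltac nlia := repeat match goal with
 | H : ?T |- _ => lazymatch T with
     | is_true (leq _ _) => fail
     | @eq nat _ _ => fail
     | nat => fail
     | _ => clear H
   end end; lia.

Section Main.
Variables (R : realType) (eps delta : R) (L M : nat).
Hypotheses (he : 0 < eps) (hd : 0 < delta) (hL : (2 <= L)%N) (h2e : 2 * eps < delta)
  (hdL : delta <= 1 / L%:R) (hM : 1 <= eps * L%:R * 2 ^+ M).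

Let S := obS R eps L M.
Let N := (2 * L + M)%N.

Lemma hLr : 0 < L%:R :> R.
Proof. by rewrite ltr0n; nlia. Qed.

Lemma eL : eps * L%:R < 1 / 2.
Proof.
have h1 : delta * L%:R <= 1 by rewrite -ler_pdivlMr // hLr.
have h2 : 2 * eps * L%:R < delta * L%:R by rewrite ltr_pM2r // hLr.
lra.
Qed.

Lemma nlo x y k : (k < L)%N -> nth false (responses R S x y N) k = (k%:R / L%:R <= x).
Proof. move=> hk; rewrite nth_resp; last by rewrite /N; nlia. by rewrite /= q_lt. Qed.

Lemma nmid x y k : (k < L)%N -> nth false (responses R S x y N) (k + L) = (k%:R / L%:R + eps <= x).
Proof.
move=> hk; rewrite nth_resp; last by rewrite /N; nlia.
by rewrite /= q_mid ?addnK //; nlia.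
Qed.

Lemma acc x y : 0 <= x < 1 -> `|estimate R S x y - x| <= eps / 2.
Proof.
move=> /andP[x0 x1].
rewrite /estimate.
have -> : s_N R S = N by [].
have hLr := hLr.
set rs := responses R S x y N.
have hsz : size rs = N by rewrite size_resp.
rewrite /= /ob_est.
case hg: (in_guess L rs).
- set i := find (guess_hit L rs) (iota 0 L).
  have hi : (i < L)%N by move: hg; rewrite /in_guess has_find size_iota.
  have := nth_find 0 hg; rewrite -/i nth_iota // add0n /guess_hit nlo // nmid //.
  move=> /andP[h1 h2]; rewrite -ltNge in h2.
  rewrite ler_norml; apply/andP; split; lra.
- pose P := fun k : nat => k%:R / L%:R <= x.
  have hc : count id (take L rs) = count P (iota 0 L).
    rewrite -(mkseq_nth false (take L rs)) size_takel; last by rewrite hsz /N; nlia.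
    rewrite /mkseq count_map; apply: eq_in_count => k; rewrite mem_iota => /andP[_ hk] /=.
    by rewrite nth_take // nlo.
  have dc : forall k, P k.+1 -> P k.
    move=> k; rewrite /P => h; apply: le_trans h; apply: ler_wpM2r.
      by rewrite invr_ge0 ler0n.
    by rewrite ler_nat.
  have [c1 c2] := @count_dc P L dc.
  set c := count P (iota 0 L) in c1 c2 hc.
  have cL : (c <= L)%N by have := count_size P (iota 0 L); rewrite size_iota.
  have c0 : (0 < c)%N.
    rewrite lt0n; apply/negP => /eqP c0; move: c2; rewrite c0 /P mul0r x0.
    by move=> /(_ (ltn_trans (isT : (0 < 1)%N) hL)).
  set j := c.-1.
  have hj : (j < L)%N by rewrite /j; nlia.
  have Pj : P j by apply: c1; rewrite /j; nlia.
  have xc : x < c%:R / L%:R.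
    case: (ltnP c L) => h.
      by have := c2 h; rewrite /P -ltNge.
    have -> : c = L by nlia.
    by rewrite divff // gt_eqF.
  have gh : ~~ guess_hit L rs j.
    by move/hasPn: hg => /(_ j); apply; rewrite mem_iota; nlia.
  have ejx : j%:R / L%:R + eps <= x.
    by move: gh; rewrite /guess_hit nlo // nmid // -/(P j) Pj /= negbK.
  have hJ : Jstar_index L rs = j by rewrite /Jstar_index hc.
  rewrite hJ.
  set J0 := subint R eps L j.
  set bits := drop (2 * L) rs.
  have hb : size bits = M by rewrite size_drop hsz /N; nlia.
  have cj : c = j.+1 by rewrite /j prednK.
  have hJ0 : J0.1 <= x < J0.2 by rewrite /J0 /subint /= ejx -cj xc.
  have hbits : forall i, (i < size bits)%N ->
      nth false bits i = (midpt R (bisect_interval R J0 (take i bits)) <= x).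
    move=> i; rewrite hb => hi; rewrite /bits nth_drop nth_resp; last by rewrite /N; nlia.
    rewrite /= q_ph2; last by nlia.
    rewrite hg hJ.
    have -> : (2 * L + i - 2 * L)%N = i by nlia.
    by [].
  have [/andP[h1 h2] hl] := bisect_inv R J0 x bits hJ0 hbits.
  rewrite hb in hl.
  set I := bisect_interval R J0 bits in h1 h2 hl *.
  have hw : J0.2 - J0.1 <= 1 / L%:R - eps.
    rewrite /J0 /subint /= -addn1 natrD mulrDl; lra.
  have hB2 : 1 / L%:R <= eps * 2 ^+ M by rewrite ler_pdivrMr // mulrAC.
  have h2M : 0 < (2:R) ^+ M by apply: exprn_gt0.
  have hI : I.2 - I.1 <= eps.
    rewrite hl ler_pdivrMr //; apply: (le_trans hw); apply: (le_trans _ hB2).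
    by rewrite lerBlDr lerDl ltW.
  rewrite /midpt ler_norml; apply/andP; split; lra.
Qed.

Lemma resp_q x y k : (k < N)%N ->
  s_query R S k (responses R S x y k) y = ob_query R eps L M k (take k (responses R S x y N)) y.
Proof. by move=> hk; rewrite (resp_take R S x y k N (ltnW hk)). Qed.

Lemma queries_eq x x' y y' : in_guess L (responses R S x' y' N) ->
  (if in_guess L (responses R S x y N) then (y' = y)
   else (nat_of_ord y'.1 = Jstar_index L (responses R S x y N) /\ val y'.2 = drop (2 * L) (responses R S x y N))) ->
  queries R S x' y' = queries R S x y.
Proof.
move=> hg' hy; rewrite /queries; apply/eq_in_map => k; rewrite mem_iota add0n => /andP[_ hk].
have hk' : (k < N)%N := hk.
rewrite !resp_q //.
case: (ltnP k L) => h1; first by rewrite !q_lt.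
case: (ltnP k (2 * L)) => h2; first by rewrite !q_mid // h1 h2.
rewrite !q_ph2 // hg'.
by case: (in_guess L _) hy => [->|[-> ->]].
Qed.

Definition pp (j : nat) : R := j%:R * (1 + eps) / L%:R.

Lemma sep j1 j2 : (j1 < j2)%N -> delta < pp j2 - pp j1.
Proof.
move=> h.
have hLr := hLr.
have d1 : 1 <= j2%:R - j1%:R :> R.
  have : j1.+1%:R <= j2%:R :> R by rewrite ler_nat.
  rewrite -natr1; lra.
have e : pp j2 - pp j1 = (j2%:R - j1%:R) * ((1 + eps) / L%:R) by rewrite /pp; ring.
have u : 1 / L%:R < (1 + eps) / L%:R.
  by rewrite ltr_pM2r ?invr_gt0 // ltrDl.
have v : (1 + eps) / L%:R <= (j2%:R - j1%:R) * ((1 + eps) / L%:R).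
  by apply: ler_peMl => //; apply: ltW; apply: lt_trans u; rewrite mul1r invr_gt0.
by rewrite e; apply: (le_lt_trans hdL); apply: (lt_le_trans u v).
Qed.

Lemma key x y qb j : 0 <= x < 1 -> qb = queries R S x y -> (j < L)%N -> info_set R S qb (pp j).
Proof.
move=> /andP[x0 x1] hq hj.
have hLr := hLr.
set rs := responses R S x y N.
have hs : size (take L rs) = L by rewrite size_takel // size_resp /N; nlia.
have hJ : (Jstar_index L rs < L)%N.
  rewrite /Jstar_index; have := count_size id (take L rs); rewrite hs; nlia.
have hsz : size (drop (2 * L) rs) == M by rewrite size_drop size_resp /N addKn.
pose y' : s_seed R S := if in_guess L rs then y else (Ordinal hJ, Tuple hsz).
have hjL : j%:R + 1 <= L%:R :> R by rewrite natr1 ler_nat.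
have hje : j%:R * eps <= L%:R * eps by apply: ler_wpM2r; [exact: ltW | rewrite ler_nat ltnW].
have eL := eL.
have e1 : pp j = j%:R / L%:R + j%:R * eps / L%:R.
  by rewrite /pp; field; rewrite gt_eqF.
have e2 : j%:R * eps / L%:R < eps.
  by rewrite ltr_pdivrMr // mulrC ltr_pM2l // ltr_nat.
have e3 : 0 <= j%:R * eps / L%:R by rewrite divr_ge0 // mulr_ge0 // ltW.
split.
  apply/andP; split; first by rewrite /pp divr_ge0 // mulr_ge0 //; lra.
  rewrite /pp ltr_pdivrMr // mul1r; lra.
rewrite /Qset /seed_prob; apply: divr_gt0; rewrite ltr0n; apply/card_gt0P; exists y' => //.
apply/eqP; rewrite hq; apply: queries_eq.
  apply/hasP; exists j; first by rewrite mem_iota; nlia.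
  rewrite /guess_hit nlo // nmid //; apply/andP; split; first by rewrite e1; lra.
  by rewrite -ltNge e1; lra.
by rewrite /y' -/rs; case: (in_guess L rs).
Qed.

Lemma priv x qb : 0 <= x < 1 -> Qset R S x qb -> Cdelta_ge R delta (info_set R S qb) L.
Proof.
move=> hx hQ.
have [y hy] : exists y, qb = queries R S x y.
  move: hQ; rewrite /Qset /seed_prob /= => hQ.
  case/boolP: [exists y : s_seed R S, queries R S x y == qb] => [/existsP [y /eqP hy] | /existsPn hn].
    by exists y.
  exfalso; move: hQ; rewrite eq_card0 ?mul0r ?ltxx //.
  by move=> z; rewrite !inE; apply/negbTE/hn.
move=> n [a [b [hab hcov]]].
have hc : forall j : 'I_L, exists i : 'I_n, a i <= pp j <= b i.
  move=> j; apply: hcov; exact: key hx hy (ltn_ord j).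
case: (choice hc) => c hcj.
have inj : injective c.
  move=> j1 j2 e; apply/val_inj => /=.
  have [h1 h2] := hab (c j1).
  have /andP [k1 k2] := hcj j1.
  have /andP [k3 k4] := hcj j2.
  rewrite -e in k3 k4.
  case: (ltngtP j1 j2) => // h; exfalso.
    by have := sep j1 j2 h; lra.
  by have := sep j2 j1 h; lra.
by have := leq_card c inj; rewrite !card_ord.
Qed.
End Main.

Theorem proposition1 (R : realType) (eps delta : R) (L : nat) :
  0 < eps -> 0 < delta -> (2 <= L)%N -> 2 * eps < delta -> delta <= 1 / L%:R ->
  private R eps delta L (opportunistic_bisection R eps L).
Proof.
move=> he hd hL h2e hdL.
have eL1 := @eL R eps delta L 0%N hL h2e hdL.
have eL2 : eps * L%:R < 1 by apply: (lt_trans eL1); lra.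
have hM := obM_bound R eps L he (ltn_trans (isT : (0 < 1)%N) hL) eL2.
change (opportunistic_bisection R eps L) with (obS R eps L (obM R eps L)).
split.
- move=> x hx; rewrite /seed_prob.
  have hT : (0 < #|s_seed R (obS R eps L (obM R eps L))|)%N.
    by rewrite /= card_prod card_tuple card_bool card_ord muln_gt0 expn_gt0 /=; lia.
  rewrite (@eq_card _ _ (s_seed R (obS R eps L (obM R eps L)))) ?divff //.
    by rewrite pnatr_eq0 -lt0n.
  by move=> z; rewrite !inE; apply: acc.
- by move=> x qb hx hQ; apply: priv hQ.
Qed.
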